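(* Let $Q$ be a square-free word of length $n\geq 2$. Then the number of almost-square factors of $Q$ (counted as occurrences, i.e., as pairs (starting position, length) such that the corresponding factor is an almost-square) is less than $2n\log_{5/4} n$.
   Context: Words are finite sequences of letters. A factor of $Q$ is a contiguous subword. An extension of a word $W$ over an alphabet $\mathbb{A}$ is a word $W_1xW_2$ with $W=W_1W_2$ ($W_1,W_2$ possibly empty) and $x\in\mathbb{A}$. An almost-square is a word of the form $WW'$ where $W'$ is either an extension of $W$ or is obtained by deleting one letter from $W$. A square is a nonempty word of the form $YY$; a word is square-free if none of its factors is a square. *)

(* Defs.v *)
From mathcomp Require Import all_boot.
From Stdlib Require Import Reals ClassicalEpsilon.
Set Implicit Arguments. Unset Strict Implicit. Unset Printing Implicit Defensive.

Section Words.
Variable T : Type.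

Definition factor (f Q : seq T) : Prop := exists u v, Q = u ++ f ++ v.

Definition square_free (Q : seq T) : Prop :=
  forall Y : seq T, Y <> [::] -> ~ factor (Y ++ Y) Q.

Definition extension (W W' : seq T) : Prop :=
  exists W1 W2 (x : T), W = W1 ++ W2 /\ W' = W1 ++ x :: W2.

Definition deletion (W W' : seq T) : Prop :=
  exists W1 W2 (x : T), W = W1 ++ x :: W2 /\ W' = W1 ++ W2.

Definition almost_square (U : seq T) : Prop :=
  exists W W', U = W ++ W' /\ (extension W W' \/ deletion W W').

Definition almost_squareb (U : seq T) : bool :=
  if excluded_middle_informative (almost_square U) then true else false.

Definition almost_square_count (Q : seq T) : nat :=
  let n := size Q in
  size [seq p <- [seq (i, l) | i <- iota 0 n, l <- iota 1 n]
          | (p.1 + p.2 <= n) && almost_squareb (take p.2 (drop p.1 Q))].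
End Words.

(* Main.v *)
Require Import Defs.
From mathcomp Require Import all_boot zify.
From Stdlib Require Import ClassicalEpsilon.
Set Implicit Arguments. Unset Strict Implicit. Unset Printing Implicit Defensive.

Section Core.
Variable T : Type.
Variable w : nat -> T.
Variable n : nat.

Definition SF := forall s p, 0 < p -> s + 2*p <= n ->
  (forall k, s <= k -> k < s + p -> w k = w (k + p)) -> False.

Definition ext i m a := i + 2*m + 1 <= n /\
  (forall k, i <= k -> k < i + a -> w k = w (k + m)) /\
  (forall k, i + a <= k -> k < i + m -> w k = w (k + m + 1)).

Definition del i m a := i + 2*m + 1 <= n /\
  (forall k, i <= k -> k < i + a -> w k = w (k + m + 1)) /\
  (forall k, i + a < k -> k <= i + m -> w k = w (k + m)).

Lemma weq x y : x = y -> w x = w y. Proof. by move->. Qed.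

Hypothesis sf : SF.

Lemma G_gap i m m' : ext i m 0 -> ext i m' 0 -> m < m' -> 2*m <= m'.
Proof.
move=> [hn1 [_ h1]] [hn2 [_ h2]] lt.
rewrite leqNgt; apply/negP => lt2.
apply: (@sf (i+m+1) (m'-m)); [lia | lia | ].
move=> k k1 k2.
have e1 := h1 (k-m-1) ltac:(lia) ltac:(lia).
have e2 := h2 (k-m-1) ltac:(lia) ltac:(lia).
transitivity (w (k - m - 1 + m + 1)); first by apply: weq; lia.
rewrite -e1 e2; apply: weq; lia.
Qed.



Lemma E_gap i m m' a a' : ext i m a -> ext i m' a' -> 1 <= a -> a <= m ->
  m < m' -> 4*m <= 3*m'.
Proof.
move=> [hn1 [h1a h1b]] [hn2 [h2a h2b]] a1 am lt.
rewrite leqNgt; apply/negP => lt2.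
case: (leqP a a') => aa.
- have c1 : a < m' - m.
    rewrite ltnNge; apply/negP => c.
    apply: (@sf (i+m) (m'-m)); [lia | lia | ].
    move=> k k1 k2.
    have e1 := h1a (k-m) ltac:(lia) ltac:(lia).
    have e2 := h2a (k-m) ltac:(lia) ltac:(lia).
    transitivity (w (k - m + m)); first by apply: weq; lia.
    rewrite -e1 e2; apply: weq; lia.
  have c2 : minn a' m - a < m' - m - 1.
    rewrite ltnNge; apply/negP => c.
    apply: (@sf (i+m+1+a) (m'-m-1)); [lia | lia | ].
    move=> k k1 k2.
    have e1 := h1b (k-m-1) ltac:(lia) ltac:(lia).
    have e2 := h2a (k-m-1) ltac:(lia) ltac:(lia).
    transitivity (w (k - m - 1 + m + 1)); first by apply: weq; lia.
    rewrite -e1 e2; apply: weq; lia.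
  have c3 : a' < m -> m - a' < m' - m.
    move=> am'; rewrite ltnNge; apply/negP => c.
    apply: (@sf (i+m+1+a') (m'-m)); [lia | lia | ].
    move=> k k1 k2.
    have e1 := h1b (k-m-1) ltac:(lia) ltac:(lia).
    have e2 := h2b (k-m-1) ltac:(lia) ltac:(lia).
    transitivity (w (k - m - 1 + m + 1)); first by apply: weq; lia.
    rewrite -e1 e2; apply: weq; lia.
  case: (ltnP a' m) => am'; [have := c3 am'|]; lia.
- have c1 : a' < m' - m.
    rewrite ltnNge; apply/negP => c.
    apply: (@sf (i+m) (m'-m)); [lia | lia | ].
    move=> k k1 k2.
    have e1 := h1a (k-m) ltac:(lia) ltac:(lia).
    have e2 := h2a (k-m) ltac:(lia) ltac:(lia).
    transitivity (w (k - m + m)); first by apply: weq; lia.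
    rewrite -e1 e2; apply: weq; lia.
  have c2 : a - a' <= m' - m.
    rewrite leqNgt; apply/negP => c.
    apply: (@sf (i+m+a') (m'-m+1)); [lia | lia | ].
    move=> k k1 k2.
    have e1 := h1a (k-m) ltac:(lia) ltac:(lia).
    have e2 := h2b (k-m) ltac:(lia) ltac:(lia).
    transitivity (w (k - m + m)); first by apply: weq; lia.
    rewrite -e1 e2; apply: weq; lia.
  have c3 : m - a < m' - m.
    rewrite ltnNge; apply/negP => c.
    apply: (@sf (i+m+1+a) (m'-m)); [lia | lia | ].
    move=> k k1 k2.
    have e1 := h1b (k-m-1) ltac:(lia) ltac:(lia).
    have e2 := h2b (k-m-1) ltac:(lia) ltac:(lia).
    transitivity (w (k - m - 1 + m + 1)); first by apply: weq; lia.
    rewrite -e1 e2; apply: weq; lia.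
  lia.
Qed.

Lemma D_gap i m m' a a' : del i m a -> del i m' a' -> 1 <= a -> 1 <= a' ->
  m < m' -> 4*m <= 3*m'.
Proof.
move=> [hn1 [h1a h1b]] [hn2 [h2a h2b]] a1 a1' lt.
rewrite leqNgt; apply/negP => lt2.
have c0 : minn a a' < m' - m.
  rewrite ltnNge; apply/negP => c.
  apply: (@sf (i+m+1) (m'-m)); [lia | lia | ].
  move=> k k1 k2.
  have e1 := h1a (k-m-1) ltac:(lia) ltac:(lia).
  have e2 := h2a (k-m-1) ltac:(lia) ltac:(lia).
  transitivity (w (k - m - 1 + m + 1)); first by apply: weq; lia.
  rewrite -e1 e2; apply: weq; lia.
case: (leqP a a') => aa.
- have c2 : minn a' (m+1) - a - 1 <= m' - m.
    rewrite leqNgt; apply/negP => c.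
    apply: (@sf (i+m+a+1) (m'-m+1)); [lia | lia | ].
    move=> k k1 k2.
    have e1 := h1b (k-m) ltac:(lia) ltac:(lia).
    have e2 := h2a (k-m) ltac:(lia) ltac:(lia).
    transitivity (w (k - m + m)); first by apply: weq; lia.
    rewrite -e1 e2; apply: weq; lia.
  have c3 : a' <= m -> m - a' < m' - m.
    move=> am'; rewrite ltnNge; apply/negP => c.
    apply: (@sf (i+m+a'+1) (m'-m)); [lia | lia | ].
    move=> k k1 k2.
    have e1 := h1b (k-m) ltac:(lia) ltac:(lia).
    have e2 := h2b (k-m) ltac:(lia) ltac:(lia).
    transitivity (w (k - m + m)); first by apply: weq; lia.
    rewrite -e1 e2; apply: weq; lia.
  case: (leqP a' m) => am'; [have := c3 am'|]; lia.
- have c2 : a - a' - 1 < m' - m - 1.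
    rewrite ltnNge; apply/negP => c.
    apply: (@sf (i+m+a'+2) (m'-m-1)); [lia | lia | ].
    move=> k k1 k2.
    have e1 := h1a (k-m-1) ltac:(lia) ltac:(lia).
    have e2 := h2b (k-m-1) ltac:(lia) ltac:(lia).
    transitivity (w (k - m - 1 + m + 1)); first by apply: weq; lia.
    rewrite -e1 e2; apply: weq; lia.
  have c3 : a <= m -> m - a < m' - m.
    move=> am'; rewrite ltnNge; apply/negP => c.
    apply: (@sf (i+m+a+1) (m'-m)); [lia | lia | ].
    move=> k k1 k2.
    have e1 := h1b (k-m) ltac:(lia) ltac:(lia).
    have e2 := h2b (k-m) ltac:(lia) ltac:(lia).
    transitivity (w (k - m + m)); first by apply: weq; lia.
    rewrite -e1 e2; apply: weq; lia.
  case: (leqP a m) => am'; [have := c3 am'|]; lia.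
Qed.

End Core.

Lemma growth (X : nat -> bool) (A B b : nat) :
  (forall m, X m -> b <= m) ->
  (forall m m', X m -> X m' -> m < m' -> B * m <= A * m') ->
  forall N, count X (iota 0 N) = 0 \/ exists m, X m /\ m < N /\
     b * B ^ (count X (iota 0 N)).-1 <= A ^ (count X (iota 0 N)).-1 * m.
Proof.
move=> hb hg; elim=> [|N IH]; first by left.
rewrite -addn1 iotaD count_cat /= addn0.
case XN: (X N); last first.
  rewrite addn0; case: IH => [->|[m [Xm [lt h]]]]; [by left|right].
  by exists m; split => //; split => //; lia.
right; case: IH => [->|[m [Xm [lt h]]]].
  exists N; split => //; split; first lia.
  have -> : (0 + true).-1 = 0 by []. by rewrite !expn0 muln1 mul1n; apply: hb.
exists N; split => //; split; first lia.
have g := hg m N Xm XN lt.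
move: h; case: (count X (iota 0 N)) => [|k] /=.
  rewrite !expn0 !muln1 !mul1n => h.
  lia.
rewrite !expnD !expn1 => h.
move: (B ^ k) (A ^ k) h => P R h; nia.
Qed.

Section Classify.
Variable T : Type.
Variable x0 : T.
Variable Q : seq T.
Local Notation w := (nth x0 Q).
Local Notation n := (size Q).

Lemma ext_list (W1 W2 : seq T) x t :
  let U := (W1 ++ W2) ++ (W1 ++ x :: W2) in
  (t < size W1 -> nth x0 U t = nth x0 U (t + (size W1 + size W2))) /\
  (size W1 <= t -> t < size W1 + size W2 ->
     nth x0 U t = nth x0 U (t + (size W1 + size W2) + 1)).
Proof.
move=> U; split => h.
  rewrite /U !nth_cat size_cat.
  rewrite (_ : t < size W1 + size W2 = true); last by apply/idP; lia.
  rewrite h (_ : t + (size W1 + size W2) < size W1 + size W2 = false); last by apply/negbTE; lia.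
  by rewrite (_ : t + (size W1 + size W2) - (size W1 + size W2) = t) ?h //; lia.
move=> h2; rewrite /U !nth_cat size_cat.
rewrite (_ : t < size W1 + size W2 = true); last by apply/idP; lia.
rewrite (_ : t < size W1 = false); last by apply/negbTE; lia.
rewrite (_ : t + (size W1 + size W2) + 1 < size W1 + size W2 = false); last by apply/negbTE; lia.
rewrite (_ : t + (size W1 + size W2) + 1 - (size W1 + size W2) < size W1 = false); last by apply/negbTE; lia.
by rewrite (_ : t + (size W1 + size W2) + 1 - (size W1 + size W2) - size W1 = (t - size W1).+1) //; lia.
Qed.

Lemma del_list (W1 W2 : seq T) x t :
  let U := (W1 ++ x :: W2) ++ (W1 ++ W2) in
  (t < size W1 -> nth x0 U t = nth x0 U (t + (size W1 + size W2) + 1)) /\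
  (size W1 < t -> t <= size W1 + size W2 ->
     nth x0 U t = nth x0 U (t + (size W1 + size W2))).
Proof.
move=> U; split => h.
  rewrite /U !nth_cat size_cat /=.
  rewrite (_ : t < size W1 + (size W2).+1 = true); last by apply/idP; lia.
  rewrite h (_ : t + (size W1 + size W2) + 1 < size W1 + (size W2).+1 = false); last by apply/negbTE; lia.
  by rewrite (_ : t + (size W1 + size W2) + 1 - (size W1 + (size W2).+1) = t) ?h //; lia.
move=> h2; rewrite /U !nth_cat size_cat /=.
rewrite (_ : t < size W1 + (size W2).+1 = true); last by apply/idP; lia.
rewrite (_ : t < size W1 = false); last by apply/negbTE; lia.
rewrite (_ : t + (size W1 + size W2) < size W1 + (size W2).+1 = false); last by apply/negbTE; lia.
rewrite (_ : t + (size W1 + size W2) - (size W1 + (size W2).+1) < size W1 = false); last by apply/negbTE; lia.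
rewrite (_ : t - size W1 = (t - size W1 - 1).+1); last by lia.
by rewrite /= (_ : t + (size W1 + size W2) - (size W1 + (size W2).+1) - size W1 = t - size W1 - 1) //; lia.
Qed.

Lemma classify i l : SF w n -> i + l <= n -> 0 < l ->
  almost_square (take l (drop i Q)) ->
  l = 1 \/ exists m, l = 2*m+1 /\ 1 <= m /\
    (ext w n i m 0 \/ (exists a, 1 <= a /\ a < m /\ ext w n i m a) \/
     (exists a, 1 <= a /\ a < m /\ del w n i m a)).
Proof.
move=> sf hl l0 [W [W' [eU [[W1 [W2 [x [eW eW']]]]|[W1 [W2 [x [eW eW']]]]]]]].
- set U := take l (drop i Q) in eU.
  have hU : forall t, t < l -> nth x0 U t = w (i + t).
    by move=> t lt; rewrite /U nth_take // nth_drop.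
  have sU : size U = l by rewrite /U size_takel // size_drop; lia.
  subst W W'.
  have hl' : l = 2*(size W1 + size W2)+1 by rewrite -sU eU !size_cat /=; lia.
  have E : ext w n i (size W1 + size W2) (size W1).
    split; first lia. split.
    + move=> k k1 k2.
      have := ext_list W1 W2 x (k - i); rewrite /= -eU => -[h _].
      transitivity (w (i + (k-i))); first by apply: weq; lia.
      rewrite -hU; last lia. rewrite h; last lia. rewrite hU; last lia.
      apply: weq; lia.
    + move=> k k1 k2.
      have := ext_list W1 W2 x (k - i); rewrite /= -eU => -[_ h].
      transitivity (w (i + (k-i))); first by apply: weq; lia.
      rewrite -hU; last lia. rewrite h; [|lia|lia]. rewrite hU; last lia.
      apply: weq; lia.
  move: E hl'; move: (size W1 + size W2) => m; move: (size W1) => a E hl'.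
  case: (posnP m) => m0; first by left; lia.
  right; exists m; split => //; split; first lia.
  case: (posnP a) => a0; first by left; rewrite -a0.
  case: (ltnP a m) => am.
    by right; left; exists a.
  exfalso; case: E => [hn [h1 _]].
  apply: (@sf i m); [lia|lia|]. move=> k k1 k2; apply: h1; lia.
- set U := take l (drop i Q) in eU.
  have hU : forall t, t < l -> nth x0 U t = w (i + t).
    by move=> t lt; rewrite /U nth_take // nth_drop.
  have sU : size U = l by rewrite /U size_takel // size_drop; lia.
  subst W W'.
  have hl' : l = 2*(size W1 + size W2)+1 by rewrite -sU eU !size_cat /=; lia.
  have E : del w n i (size W1 + size W2) (size W1).
    split; first lia. split.
    + move=> k k1 k2.
      have := del_list W1 W2 x (k - i); rewrite /= -eU => -[h _].
      transitivity (w (i + (k-i))); first by apply: weq; lia.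
      rewrite -hU; last lia. rewrite h; last lia. rewrite hU; last lia.
      apply: weq; lia.
    + move=> k k1 k2.
      have := del_list W1 W2 x (k - i); rewrite /= -eU => -[_ h].
      transitivity (w (i + (k-i))); first by apply: weq; lia.
      rewrite -hU; last lia. rewrite h; [|lia|lia]. rewrite hU; last lia.
      apply: weq; lia.
  move: E hl'; move: (size W1 + size W2) => m; move: (size W1) => a E hl'.
  case: (posnP m) => m0; first by left; lia.
  right; exists m; split => //; split; first lia.
  case: (posnP a) => a0.
    exfalso; case: E => [hn [_ h2]].
    apply: (@sf (i+1) m); [lia|lia|]. move=> k k1 k2; apply: h2; lia.
  case: (ltnP a m) => am.
    by right; right; exists a.
  left; case: E => [hn [h1 _]]; split => //; split; first by move=> k; lia.
  move=> k k1 k2; apply: h1; lia.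
Qed.

End Classify.

Definition bb (P : Prop) : bool := if excluded_middle_informative P then true else false.
Lemma bbP (P : Prop) : bb P -> P.
Proof. by rewrite /bb; case: excluded_middle_informative. Qed.
Lemma bbI (P : Prop) : P -> bb P.
Proof. by rewrite /bb; case: excluded_middle_informative. Qed.

Lemma count_half (Y : pred nat) N :
  count (fun l => odd l && Y l./2) (iota 0 N) <= count Y (iota 0 N).
Proof.
have H : forall M, count (fun l => odd l && Y l./2) (iota 0 M.*2) = count Y (iota 0 M).
  elim=> [|M IH] //.
  rewrite doubleS -addn2 -(addn1 M) !iotaD !count_cat IH /= add0n.
  rewrite odd_double /=.
  by rewrite uphalf_double add0n.
rewrite -H -addnn iotaD count_cat; exact: leq_addr.
Qed.

Lemma count_or3 (a b c : pred nat) s :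
  count (fun x => a x || b x || c x) s <= count a s + count b s + count c s.
Proof.
elim: s => //= x s IH.
case: (a x); case: (b x); case: (c x) => /=; lia.
Qed.

Lemma count_iota1 (p : pred nat) N : count p (iota 1 N) <= count p (iota 0 N.+1).
Proof. by rewrite /= leq_addl. Qed.

Section Count.
Variable T : Type.
Variable x0 : T.
Variable Q : seq T.
Local Notation w := (nth x0 Q).
Local Notation n := (size Q).

Definition Gb i m := (0 < m) && bb (ext w n i m 0).
Definition Eb i m := bb (exists a, 0 < a /\ a < m /\ ext w n i m a).
Definition Db i m := bb (exists a, 0 < a /\ a < m /\ del w n i m a).

Lemma count_split : almost_square_count Q =
  sumn [seq count (fun l => (i + l <= n) && almost_squareb (take l (drop i Q))) (iota 1 n)
       | i <- iota 0 n].
Proof.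
rewrite /almost_square_count size_filter count_flatten -map_comp.
congr sumn; apply: eq_map => i /=; rewrite count_map.
by apply: eq_count => l.
Qed.

Hypothesis sf : SF w n.

Lemma row_bound i :
  count (fun l => (i + l <= n) && almost_squareb (take l (drop i Q))) (iota 1 n)
  <= 1 + count (Gb i) (iota 0 n.+1) + count (Eb i) (iota 0 n.+1)
       + count (Db i) (iota 0 n.+1).
Proof.
set Y := fun m => Gb i m || Eb i m || Db i m.
rewrite (@eq_in_count _ _ (fun l => (0 < l) && ((i + l <= n) && almost_squareb (take l (drop i Q))))); last first.
  by move=> l; rewrite mem_iota => /andP [h _] /=; rewrite h.
apply: (@leq_trans (count (fun l => (l == 1) || (odd l && Y l./2)) (iota 1 n))).
  apply: sub_count => l /andP [l0 /andP [hl ha]].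
  move: ha; rewrite /almost_squareb; case: excluded_middle_informative => // ha _.
  case: (classify sf hl l0 ha) => [->|[m [-> [m1 h]]]] //.
  apply/orP; right.
  have -> : (2*m+1)./2 = m.
    by rewrite addn1 -uphalfE mul2n uphalf_double.
  have -> : odd (2*m+1) by rewrite addn1 /= mul2n odd_double.
  rewrite /Y /Gb /Eb /Db /=.
  case: h => [h|[h|h]].
  - by rewrite m1 (bbI h).
  - by rewrite (bbI h) orbT.
  - by rewrite (bbI h) !orbT.
apply: (@leq_trans (count (pred1 1) (iota 1 n) + count (fun l => odd l && Y l./2) (iota 1 n))).
  rewrite -count_predUI; exact: leq_addr.
have c1 : count (pred1 1) (iota 1 n) <= 1.
  by rewrite count_uniq_mem ?iota_uniq // leq_b1.
have c2 := count_iota1 (fun l => odd l && Y l./2) n.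
have c3 := count_half Y n.+1.
have c4 : count Y (iota 0 n.+1) <= count (Gb i) (iota 0 n.+1)
   + count (Eb i) (iota 0 n.+1) + count (Db i) (iota 0 n.+1) := count_or3 _ _ _ _.
move: c1 c2 c3 c4.
move: (count (pred1 1) (iota 1 n)) (count (fun l => odd l && Y l./2) (iota 1 n)).
move: (count (fun l => odd l && Y l./2) (iota 0 n.+1)) (count Y (iota 0 n.+1)).
move=> *; lia.
Qed.

Lemma G_count i : 0 < n -> expn 2 (count (Gb i) (iota 0 n.+1)) <= n.
Proof.
move=> n0.
have := @growth (Gb i) 1 2 1 _ _ n.+1.
case.
- by move=> m /andP [].
- move=> m m' /andP [_ /bbP h] /andP [_ /bbP h'] lt.
  rewrite mul1n; exact (G_gap sf h h' lt).
- by move->.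
- move=> [m [/andP [_ /bbP [hn _]] [_]]].
  case: (count (Gb i) (iota 0 n.+1)) => [|k] /=; first by [].
  rewrite exp1n expnS; lia.
Qed.

Lemma E_count i : 0 < n -> 3 * expn 4 (count (Eb i) (iota 0 n.+1))
   <= expn 3 (count (Eb i) (iota 0 n.+1)) * (n + 2).
Proof.
move=> n0.
have := @growth (Eb i) 3 4 2 _ _ n.+1.
case.
- by move=> m /bbP [a [a0 [am _]]]; lia.
- move=> m m' /bbP [a [a0 [am h]]] /bbP [a' [a0' [am' h']]] lt.
  exact (E_gap sf h h' a0 ltac:(lia) lt).
- by move->; rewrite !expn0; lia.
- move=> [m [/bbP [a [_ [_ [hn _]]]] [_]]].
  case: (count (Eb i) (iota 0 n.+1)) => [|k] /=; first by rewrite !expn0; lia.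
  rewrite !expnS; move: (expn 4 k) (expn 3 k) => P R h; nia.
Qed.

Lemma D_count i : 0 < n -> 3 * expn 4 (count (Db i) (iota 0 n.+1))
   <= expn 3 (count (Db i) (iota 0 n.+1)) * (n + 2).
Proof.
move=> n0.
have := @growth (Db i) 3 4 2 _ _ n.+1.
case.
- by move=> m /bbP [a [a0 [am _]]]; lia.
- move=> m m' /bbP [a [a0 [am h]]] /bbP [a' [a0' [am' h']]] lt.
  exact (D_gap sf h h' a0 a0' lt).
- by move->; rewrite !expn0; lia.
- move=> [m [/bbP [a [_ [_ [hn _]]]] [_]]].
  case: (count (Db i) (iota 0 n.+1)) => [|k] /=; first by rewrite !expn0; lia.
  rewrite !expnS; move: (expn 4 k) (expn 3 k) => P R h; nia.
Qed.

End Count.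

Lemma SF_of_square_free (T : Type) (x0 : T) (Q : seq T) :
  square_free Q -> SF (nth x0 Q) (size Q).
Proof.
move=> sq s p p0 hs h.
set Y := take p (drop s Q).
have sY : size Y = p by rewrite /Y size_takel // size_drop; lia.
have e1 : take (2*p) (drop s Q) = Y ++ Y.
  apply: (@eq_from_nth _ x0).
    rewrite size_cat sY size_takel; [lia | rewrite size_drop; lia].
  move=> t; rewrite size_takel ?size_drop; last lia.
  move=> tl; rewrite nth_take // nth_drop nth_cat sY.
  case: ifP => tp.
    by rewrite /Y nth_take // nth_drop.
  rewrite /Y nth_take; last lia.
  rewrite nth_drop.
  have := h (s + (t - p)) ltac:(lia) ltac:(lia).
  by rewrite (_ : s + (t - p) + p = s + t); [move->|lia].
apply: (sq Y).
  by move=> e; move: sY; rewrite e /=; lia.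
exists (take s Q), (drop (2*p) (drop s Q)).
by rewrite -e1 cat_take_drop cat_take_drop.
Qed.

From Stdlib Require Import Reals Lra.
Local Open Scope R_scope.

Lemma INR_expn (a k : nat) : INR (expn a k) = INR a ^ k.
Proof. elim: k => [|k IH]; first by []. by rewrite expnS ?mulnE mult_INR IH. Qed.

Lemma INR_le_nat (a b : nat) : (a <= b)%nat -> INR a <= INR b.
Proof. by move/leP; apply: le_INR. Qed.

Lemma lnle x y : 0 < x -> x <= y -> ln x <= ln y.
Proof.
move=> x0 [h|->]; last by apply: Rle_refl.
by apply: Rlt_le; apply: ln_increasing.
Qed.

Lemma ln_gt_0 x : 1 < x -> 0 < ln x.
Proof. move=> h; rewrite -ln_1; apply: ln_increasing; lra. Qed.

Lemma real_bound (n g e d : nat) : (2 <= n)%nat -> (expn 2 g <= n)%nat ->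
  (muln 3 (expn 4 e) <= muln (expn 3 e) (addn n 2))%nat -> (muln 3 (expn 4 d) <= muln (expn 3 d) (addn n 2))%nat ->
  INR (addn (addn (addn 1 g) e) d) < 2 * ln (INR n) / ln (5/4).
Proof.
move=> n2 hg he hd.
have nR : 2 <= INR n by have := INR_le_nat n2.
set L := ln (5/4).
have L0 : 0 < L by apply: ln_gt_0; lra.
have l2 : 0 < ln 2 by apply: ln_gt_0; lra.
have lnn : ln 2 <= ln (INR n) by apply: lnle; lra.
have F1 : 3 * L <= ln 2.
  have := lnle (x := (5/4)^3) (y := 2) ltac:(apply: pow_lt; lra) ltac:(simpl; lra).
  by rewrite ln_pow; [rewrite /L; simpl; lra | lra].
have F2 : 5 * L + 4 * ln 3 <= 8 * ln 2.
  have := lnle (x := (5/4)^5 * 3^4) (y := 2^8)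
     ltac:(apply: Rmult_lt_0_compat; apply: pow_lt; lra) ltac:(simpl; lra).
  rewrite ln_mult; try (apply: pow_lt; lra).
  rewrite !ln_pow; try lra. rewrite /L; simpl; lra.
have F3 : 15 * L + 24 * ln 2 < 24 * ln 3.
  have := ln_increasing ((5/4)^15 * 2^24) (3^24)
     ltac:(apply: Rmult_lt_0_compat; apply: pow_lt; lra) ltac:(simpl; lra).
  rewrite ln_mult; try (apply: pow_lt; lra).
  rewrite !ln_pow; try lra. rewrite /L; simpl; lra.
have G : INR g * ln 2 <= ln (INR n).
  have := INR_le_nat hg; rewrite INR_expn => h.
  have e2 : INR 2 = 2 by simpl; lra.
  rewrite e2 in h.
  have := lnle (x := 2 ^ g) (y := INR n) ltac:(apply: pow_lt; lra) h.
  by rewrite ln_pow; lra.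
have E : forall e, (muln 3 (expn 4 e) <= muln (expn 3 e) (addn n 2))%nat ->
    INR e * (8 * ln 2 - 4 * ln 3) <= 4 * (ln (INR n) + ln 2 - ln 3).
  move=> e' he'.
  have := INR_le_nat he'; rewrite ?mulnE ?addnE !mult_INR !INR_expn plus_INR => h.
  have e3 : INR 3 = 3 by simpl; lra.
  have e4 : INR 4 = 4 by simpl; lra.
  have e2 : INR 2 = 2 by simpl; lra.
  rewrite e3 e4 e2 in h.
  have h2 : 3 * 4 ^ e' <= 3 ^ e' * (2 * INR n).
    apply: (Rle_trans _ _ _ h); apply: Rmult_le_compat_l.
      by apply: pow_le; lra.
    lra.
  have := lnle (x := 3 * 4 ^ e') (y := 3 ^ e' * (2 * INR n))
     ltac:(apply: Rmult_lt_0_compat; [|apply: pow_lt]; lra) h2.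
  rewrite !ln_mult; try lra; try (apply: pow_lt; lra).
  rewrite !ln_pow; try lra.
  have -> : 4 = 2 * 2 by lra.
  rewrite ln_mult; try lra.
have Ee := E e he. have Ed := E d hd.
have ge : 0 <= INR g by apply: pos_INR.
have ee : 0 <= INR e by apply: pos_INR.
have de : 0 <= INR d by apply: pos_INR.
have G' : 3 * INR g * L <= ln (INR n) by nra.
have Ee' : 5 * INR e * L <= 4 * (ln (INR n) + ln 2 - ln 3) by nra.
have Ed' : 5 * INR d * L <= 4 * (ln (INR n) + ln 2 - ln 3) by nra.
rewrite ?addnE !plus_INR.
apply: (Rmult_lt_reg_r L) => //.
rewrite /Rdiv Rmult_assoc Rinv_l; last lra.
simpl; nra.
Qed.

Lemma sum_lt (f : nat -> nat) (s : seq nat) B : s <> [::] ->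
  (forall i, INR (f i) < B) -> INR (sumn (map f s)) < INR (size s) * B.
Proof.
move=> sn h.
have le : forall s', INR (sumn (map f s')) <= INR (size s') * B.
  elim=> [|x s' IH]; first by rewrite /=; lra.
  have -> : sumn (map f (x :: s')) = addn (f x) (sumn (map f s')) by [].
  have -> : size (x :: s') = (size s').+1 by [].
  rewrite ?addnE plus_INR S_INR; have := h x; lra.
case: s sn => [//|x s'] _.
have -> : sumn (map f (x :: s')) = addn (f x) (sumn (map f s')) by [].
have -> : size (x :: s') = (size s').+1 by [].
rewrite ?addnE plus_INR S_INR; have := h x; have := le s'; lra.
Qed.

Local Close Scope R_scope.

Theorem mainTheorem7 (T : Type) (Q : seq T) :
  (2 <= size Q)%N -> square_free Q ->
  (INR (almost_square_count Q)
     < 2 * INR (size Q) * (ln (INR (size Q)) / ln (5 / 4)))%R.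
Proof.
move=> n2 sq.
have [x0 _] : exists x : T, True by case: Q n2 {sq} => [|x ?] //; exists x.
have sf := @SF_of_square_free T x0 Q sq.
have n0 : (0 < size Q)%N by apply: leq_trans n2.
rewrite count_split.
have hrow : forall i : nat, (INR (count (fun l : nat => (i + l <= size Q)%nat && almost_squareb (take l (drop i Q))) (iota 1 (size Q)))
     < 2 * ln (INR (size Q)) / ln (5/4))%R.
  move=> i.
  apply: Rle_lt_trans (real_bound n2 (G_count sf i n0) (E_count sf i n0) (D_count sf i n0)).
  apply: INR_le_nat. exact: (row_bound sf i).
have := sum_lt (s := iota 0 (size Q)) _ hrow.
rewrite size_iota => h.
have : iota 0 (size Q) <> [::] by case: (size Q) n0.
move/h => {}h.
apply: (Rlt_le_trans _ _ _ h); right.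
rewrite /Rdiv; ring.
Qed.
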